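(* For any partition $\lambda$ with 2-core $\bar\lambda$, the ratio $H_{\mathrm{odd}}(\lambda)/H(\bar\lambda)$ is an integer.
   Context: For a partition $\lambda$, the hook length of a box of its Young diagram is the number of boxes to its right in its row plus the number below it in its column plus one; $H(\lambda)$ is the product of all hook lengths and $H_{\mathrm{odd}}(\lambda)$ the product of the odd hook lengths. The 2-core $\bar\lambda$ is the partition obtained from $\lambda$ by repeatedly removing dominoes ($1\times2$ or $2\times1$ rectangles of boxes) from the Young diagram, such that a Young diagram remains after each removal, until no more removal is possible; it is independent of the choices made. *)

(* Defs.v *)
From mathcomp Require Import all_boot.
Set Implicit Arguments. Unset Strict Implicit. Unset Printing Implicit Defensive.

(* Rows are indexed from 0; the box
   (i, j) (row i, column j) belongs to the Young diagram iff j < lambda_i. *)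
Definition is_partition (la : seq nat) : bool :=
  sorted geq la && all (fun x => 0 < x) la.

Definition part (la : seq nat) (i : nat) : nat := nth 0 la i.

Definition conj_part (la : seq nat) (j : nat) : nat := count (fun x => j < x) la.

(* hook length of box (i, j): arm + leg + 1 *)
Definition hook (la : seq nat) (i j : nat) : nat :=
  (part la i - j.+1) + (conj_part la j - i.+1) + 1.

Definition hook_prod (la : seq nat) : nat :=
  \prod_(i < size la) \prod_(j < part la i) hook la i j.

Definition odd_hook_prod (la : seq nat) : nat :=
  \prod_(i < size la) \prod_(j < part la i | odd (hook la i j)) hook la i j.

(* rm_domino la mu: mu is a partition whose Young diagram is obtained from
   that of la by removing a domino (a horizontal 1x2 domino in row i, or a
   vertical 2x1 domino in rows i, i+1 of a common column). *)
Definition rm_domino (la mu : seq nat) : Prop :=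
  is_partition mu /\
  ((exists i, part la i = (part mu i).+2 /\
              forall k, k != i -> part la k = part mu k) \/
   (exists i, part la i = (part mu i).+1 /\
              part la i.+1 = (part mu i.+1).+1 /\
              part mu i = part mu i.+1 /\
              forall k, k != i -> k != i.+1 -> part la k = part mu k)).

Inductive rm_dominoes : seq nat -> seq nat -> Prop :=
| rm_dominoes_refl la : rm_dominoes la la
| rm_dominoes_step la mu nu :
    rm_domino la mu -> rm_dominoes mu nu -> rm_dominoes la nu.

(* mu is the 2-core of la: obtained by repeated domino removals until no
   further removal is possible (independent of the choices made). *)
Definition two_core (la mu : seq nat) : Prop :=
  rm_dominoes la mu /\ ~ (exists nu, rm_domino mu nu).

(* Main.v *)
Require Import Defs.
From mathcomp Require Import all_boot all_order all_algebra zify.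
From mathcomp Require Import fingroup perm.
Set Implicit Arguments. Unset Strict Implicit. Unset Printing Implicit Defensive.
Import Order.TTheory GRing.Theory Num.Theory.

Lemma sum_resid (R : Type) (idx : R) (op : Monoid.com_law idx) (K M : nat) (h : nat -> R) :
  \big[op/idx]_(z < K * M) h z = \big[op/idx]_(r < M) \big[op/idx]_(k < K) h (r + k * M).
Proof.
elim: K => [|K IH].
  by rewrite mul0n big_ord0 big1 // => r _; rewrite big_ord0.
rewrite (eq_bigr (fun r : 'I_M => op (\big[op/idx]_(k < K) h (r + k * M)) (h (r + K * M))));
  last by move=> r _; rewrite big_ord_recr.
rewrite big_split /= -IH mulSnr.
rewrite -!(big_mkord xpredT) (big_cat_nat _ (leq_addr M (K * M))) //=.
congr (op _ _).
rewrite -{1}(add0n (K * M)) big_addn addKn big_mkord.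
by apply: eq_bigr => i _.
Qed.

Definition Gr (w : nat -> bool) (K : nat) : nat :=
  \sum_(k < K) \sum_(k' < k) (w k && ~~ w k' && odd (k - k')).
Definition Ev (w : nat -> bool) (K : nat) : nat := \sum_(k < K) (w k && ~~ odd k).
Definition Od (w : nat -> bool) (K : nat) : nat := \sum_(k < K) (w k && odd k).

Lemma sum_odd K : \sum_(k < K) odd k = K./2.
Proof.
elim: K => [|K IH]; first by rewrite big_ord0.
by rewrite big_ord_recr /= IH addnC -uphalf_half.
Qed.

Lemma sum_even K : \sum_(k < K) ~~ odd k = uphalf K.
Proof.
elim: K => [|K IH]; first by rewrite big_ord0.
by rewrite big_ord_recr /= IH uphalf_half; case: (odd K) => /=; rewrite ?addn0 ?addn1 ?add0n ?add1n.
Qed.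

Lemma sum_split_par (w : nat -> bool) K :
  \sum_(k' < K) (~~ w k' && odd (K - k')) + (if odd K then Ev w K else Od w K)
  = (if odd K then uphalf K else K./2).
Proof.
have E1 : (if odd K then Ev w K else Od w K) = \sum_(k' < K) (w k' && odd (K - k')).
  rewrite /Ev /Od; case: ifP => oK; apply: eq_bigr => k _;
  by rewrite oddB ?(ltnW (ltn_ord k)) // oK.
have E2 : (if odd K then uphalf K else K./2) = \sum_(k' < K) odd (K - k').
  rewrite -sum_even -sum_odd; case: ifP => oK; apply: eq_bigr => k _;
  by rewrite oddB ?(ltnW (ltn_ord k)) // oK.
rewrite E1 E2 -big_split /=; apply: eq_bigr => k _.
by case: (w k); case: (odd _).
Qed.

Lemma Ev_le (w : nat -> bool) K : Ev w K <= uphalf K.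
Proof. by rewrite -sum_even; apply: leq_sum => k _; case: (w k). Qed.
Lemma Od_le (w : nat -> bool) K : Od w K <= K./2.
Proof. by rewrite -sum_odd; apply: leq_sum => k _; case: (w k). Qed.

Lemma Gr_S (w : nat -> bool) K : Gr w K.+1 = Gr w K + w K * \sum_(k' < K) (~~ w k' && odd (K - k')).
Proof.
rewrite /Gr big_ord_recr /=; congr (_ + _).
rewrite big_distrr /=; apply: eq_bigr => k _; by case: (w K); rewrite ?mul1n ?mul0n.
Qed.
Lemma Ev_S (w : nat -> bool) K : Ev w K.+1 = Ev w K + (w K && ~~ odd K).
Proof. by rewrite /Ev big_ord_recr. Qed.
Lemma Od_S (w : nat -> bool) K : Od w K.+1 = Od w K + (w K && odd K).
Proof. by rewrite /Od big_ord_recr. Qed.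

Local Open Scope ring_scope.
Definition eZ (w : nat -> bool) K : int := (Ev w K)%:Z - (Od w K)%:Z.

Lemma runner_bound (w : nat -> bool) K : eZ w K * (eZ w K - 1) <= (2 * Gr w K)%:Z.
Proof.
rewrite /eZ; elim: K => [|K IH]; first by rewrite /Ev /Od /Gr !big_ord0.
have HS := sum_split_par w K.
have HE := Ev_le w K; have HO := Od_le w K.
have U := uphalf_half K.
have D := odd_double_half K.
rewrite Gr_S Ev_S Od_S.
move: HS IH; set S := \sum_(k' < K) _ => HS IH.
case: (w K); case oK: (odd K) => /=; move: HS HE HO U D; rewrite oK /=; nia.
Qed.

Local Close Scope ring_scope.
Definition pinit (w : nat -> bool) := forall k, w k.+2 -> w k.

Lemma pinit_iter (w : nat -> bool) : pinit w -> forall n k, w (k + n.*2) -> w k.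
Proof.
move=> Pw; elim=> [|n IH] k; first by rewrite addn0.
by rewrite doubleS !addnS => /Pw /IH.
Qed.

Lemma pinit_below (w : nat -> bool) K k : pinit w -> w K -> k <= K -> odd k = odd K -> w k.
Proof.
move=> Pw wK kK oK; apply: (pinit_iter (n := (K - k)./2) Pw).
have ev: odd (K - k) = false by rewrite oddB // oK addbb.
have := odd_double_half (K - k); rewrite ev add0n => ->.
by rewrite subnKC.
Qed.

Lemma runner_eq (w : nat -> bool) K : pinit w ->
  (eZ w K * (eZ w K - 1) = (2 * Gr w K)%:Z)%R.
Proof.
move=> Pw; rewrite /eZ; elim: K => [|K IH]; first by rewrite /Ev /Od /Gr !big_ord0.
have HS := sum_split_par w K.
have U := uphalf_half K.
have D := odd_double_half K.
rewrite Gr_S Ev_S Od_S.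
move: HS IH; set S := \sum_(k' < K) _ => HS IH.
case wK: (w K) => /=; first last.
  by move: IH; rewrite !addn0; nia.
have HE : ~~ odd K -> Ev w K = uphalf K.
  move=> oK; rewrite -sum_even /Ev; apply: eq_bigr => k _.
  case ok: (odd k) => /=; first by rewrite andbF.
  rewrite andbT (pinit_below Pw wK) //; [exact: ltnW | by rewrite ok (negbTE oK)].
have HO : odd K -> Od w K = K./2.
  move=> oK; rewrite -sum_odd /Od; apply: eq_bigr => k _.
  case ok: (odd k) => /=; last by rewrite andbF.
  rewrite andbT (pinit_below Pw wK) //; [exact: ltnW | by rewrite ok oK].
case oK: (odd K) => /=; move: HS U D HE HO; rewrite oK /=.
- move=> HS U D _ /(_ isT) HO; nia.
- move=> HS U D /(_ isT) HE _; nia.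
Qed.

Definition CC (b : nat -> bool) (n M : nat) : nat :=
  \sum_(x < n) \sum_(y < x) (b x && ~~ b y && odd (x - y) && (M %| x - y)).

Lemma sum_widen_cond n1 n2 (F : nat -> nat) : n1 <= n2 ->
  \sum_(i < n1) F i = \sum_(i < n2) (i < n1) * F i.
Proof.
move=> le; rewrite (big_ord_widen n2 F le) big_mkcond /=.
by apply: eq_bigr => i _; case: (i < n1); rewrite ?mul1n ?mul0n.
Qed.

Lemma CC_inner (b : nat -> bool) K M r k : odd M -> r < M -> k < K ->
  \sum_(y < r + k * M) (b (r + k * M) && ~~ b y && odd (r + k * M - y) && (M %| r + k * M - y))
  = \sum_(k' < k) (b (r + k * M) && ~~ b (r + k' * M) && odd (k - k')).
Proof.
move=> oM rM kK.
have M0 : 0 < M by case: M oM rM.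
have xle : r + k * M <= K * M.
  by apply: leq_trans (_ : M + k * M <= _); [rewrite leq_add2r ltnW | rewrite -mulSn leq_mul2r kK orbT].
rewrite (sum_widen_cond (fun y => b (r + k * M) && ~~ b y && odd (r + k * M - y) && (M %| r + k * M - y)) xle).
rewrite (sum_resid _ _ _ (fun y => (y < r + k * M) * (b (r + k * M) && ~~ b y && odd (r + k * M - y) && (M %| r + k * M - y)))) (bigD1 (Ordinal rM)) //= [X in _ + X]big1 ?addn0; last first.
  move=> r' /eqP ner; apply: big1 => k' _.
  case lt: (r' + k' * M < r + k * M); rewrite ?mul0n // mul1n.
  case dv: (M %| _); rewrite ?andbF //; exfalso; apply: ner.
  move: dv; rewrite -eqn_mod_dvd ?(ltnW lt) // !(addnC _ (_ * M)) !modnMDl => /eqP.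
  rewrite !modn_small // => e; apply: val_inj => /=; by [].
rewrite (sum_widen_cond (fun k' => b (r + k * M) && ~~ b (r + k' * M) && odd (k - k')) (ltnW kK)); apply: eq_bigr => k' _.
rewrite ltn_add2l ltn_mul2r M0 /=.
case lk: (k' < k); rewrite ?mul0n ?mul1n //.
by rewrite subnDl -mulnBl dvdn_mull ?dvdnn // andbT oddM oM andbT.
Qed.

Definition runner (b : nat -> bool) M r := fun k => b (r + k * M).

Lemma CC_runner (b : nat -> bool) K M : odd M ->
  CC b (K * M) M = \sum_(r < M) Gr (runner b M r) K.
Proof.
move=> oM; rewrite /CC (sum_resid _ _ _ (fun x => \sum_(y < x) (b x && ~~ b y && odd (x - y) && (M %| x - y)))).
apply: eq_bigr => r _; rewrite /Gr; apply: eq_bigr => k _.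
exact: CC_inner.
Qed.

Local Open Scope ring_scope.
Definition sgn (z : nat) : int := if odd z then -1 else 1.

Lemma eZ_sum (w : nat -> bool) K : eZ w K = \sum_(k < K) (if w k then sgn k else 0).
Proof.
rewrite /eZ; elim: K => [|K IH]; first by rewrite /Ev /Od !big_ord0.
rewrite Ev_S Od_S big_ord_recr /= -IH /sgn.
by case: (w K); case: (odd K) => /=; rewrite ?addn0 ?addn1 ?addr0; lia.
Qed.

Definition Tb (b : nat -> bool) n : int := \sum_(z < n) (if b z then sgn z else 0).

Lemma sgn_sum (b : nat -> bool) K M : odd M ->
  \sum_(r < M) sgn r * eZ (runner b M r) K = Tb b (K * M).
Proof.
move=> oM; rewrite /Tb (sum_resid _ _ _ (fun z => if b z then sgn z else 0)).
apply: eq_bigr => r _; rewrite eZ_sum mulr_sumr; apply: eq_bigr => k _.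
rewrite /runner /sgn oddD oddM oM andbT.
by case: (b _); case: (odd r); case: (odd k); rewrite /= ?mulr0 ?mulN1r ?mul1r ?opprK.
Qed.

Lemma tangent (u c : int) : 0 <= (u - c) * (u - c - 1).
Proof.
case: (lerP u c) => h.
- by apply: mulr_le0; lia.
- by apply: mulr_ge0; lia.
Qed.

Lemma convex_sum M (u v : nat -> int) : (0 < M)%N ->
  \sum_(r < M) u r = \sum_(r < M) v r ->
  (forall r s, (r < M)%N -> (s < M)%N -> v r <= v s + 1) ->
  \sum_(r < M) v r * (v r - 1) <= \sum_(r < M) u r * (u r - 1).
Proof.
move=> M0 Su Bv.
have [c Hc] : exists c, forall r, (r < M)%N -> v r = c \/ v r = c + 1.
  case: (boolP [exists r : 'I_M, v r < v 0%N]) => [/existsP [r0 Hr0]|/existsPn Hn].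
  - exists (v 0%N - 1) => r rM.
    have h1 := Bv 0%N r M0 rM; have h2 := Bv r r0 rM (ltn_ord r0).
    lia.
  - exists (v 0%N) => r rM.
    have h1 := Bv r 0%N rM M0; have := Hn (Ordinal rM); rewrite /= -leNgt => h2.
    lia.
have E : forall w : nat -> int,
  \sum_(r < M) w r * (w r - 1) = \sum_(r < M) (w r - c) * (w r - c - 1)
     + 2 * c * \sum_(r < M) w r - \sum_(r < M) c * (c+1).
  move=> w; rewrite mulr_sumr -big_split -sumrB /=.
  by apply: eq_bigr => r _; lia.
have Z : \sum_(r < M) (v r - c) * (v r - c - 1) = 0.
  by apply: big1 => r _; case: (Hc r (ltn_ord r)) => ->; lia.
have P : 0 <= \sum_(r < M) (u r - c) * (u r - c - 1).
  by apply: sumr_ge0 => r _; apply: tangent.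
rewrite !E Su Z; lia.
Qed.

Lemma Posz_sum n (F : nat -> nat) : ((\sum_(i < n) F i)%N)%:Z = \sum_(i < n) (F i)%:Z.
Proof. by rewrite (big_morph Posz PoszD (erefl 0%:Z)). Qed.

Definition uZ (b : nat -> bool) K M r : int :=
  if odd r then 1 - eZ (runner b M r) K else eZ (runner b M r) K.

Lemma uZ_sum (b : nat -> bool) K M : odd M ->
  \sum_(r < M) uZ b K M r = \sum_(r < M) (odd r)%:Z + Tb b (K * M).
Proof.
move=> oM; rewrite -sgn_sum // -big_split /=; apply: eq_bigr => r _.
by rewrite /uZ /sgn; case: (odd r) => /=; lia.
Qed.

Lemma pinit_runner (b : nat -> bool) M r : pinit b -> pinit (runner b M r).
Proof.
move=> Pb k; rewrite /runner => h; apply: (pinit_iter (n := M) Pb).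
by have -> : (r + k * M + M.*2 = r + k.+2 * M)%N by rewrite -addnn !mulSn; lia.
Qed.

Lemma CC_compare (bX bY : nat -> bool) K M : odd M ->
  Tb bX (K * M) = Tb bY (K * M) -> pinit bY ->
  (forall r s, (r < M)%N -> (s < M)%N -> uZ bY K M r <= uZ bY K M s + 1) ->
  (CC bY (K * M) M <= CC bX (K * M) M)%N.
Proof.
move=> oM ET PY Bal.
have M0 : (0 < M)%N by case: M oM {ET Bal}.
suff : ((2 * CC bY (K * M) M)%N)%:Z <= ((2 * CC bX (K * M) M)%N)%:Z by rewrite lez_nat leq_pmul2l.
rewrite !CC_runner // !big_distrr /= !(big_morph Posz PoszD (erefl 0%:Z)).
apply: le_trans (_ : \sum_(r < M) uZ bX K M r * (uZ bX K M r - 1) <= _).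
  rewrite (eq_bigr (fun r : 'I_M => uZ bY K M r * (uZ bY K M r - 1))); last first.
    move=> r _; rewrite -runner_eq; last exact: pinit_runner.
    by rewrite /uZ; case: (odd r); lia.
  apply: convex_sum => //.
  by rewrite !uZ_sum // ET.
apply: ler_sum => r _.
have := runner_bound (runner bX M r) K.
by rewrite /uZ; case: (odd r); lia.
Qed.

Local Close Scope ring_scope.

Lemma cnt_mod D t m : t < D -> \sum_(z < m) (z %% D == t) = m %/ D + (t < m %% D).
Proof.
move=> tD; have D0 : 0 < D by case: D tD.
elim: m => [|m IH]; first by rewrite big_ord0 div0n mod0n.
rewrite big_ord_recr /= IH divnS // modnS.
have mlt := ltn_pmod m D0.
case: ifP => dv.
- have e : (m %% D).+1 = D.
    apply/eqP; rewrite eqn_leq mlt /=.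
    apply: dvdn_leq => //; move: dv; rewrite {1}(divn_eq m D) -addnS.
    by rewrite dvdn_addr ?dvdn_mull ?dvdnn.
  have -> : m %% D = D.-1 by lia.
  case: (ltngtP t D.-1) => h; rewrite ?ltn0 /=; lia.
- case: (ltngtP t (m %% D)) => h; rewrite ?ltn0 /=; lia.
Qed.

Lemma sum_lt_le n m (F : nat -> nat) :
  \sum_(i < n) (i < m) * F i <= \sum_(i < m) F i.
Proof.
case: (leqP m n) => h.
- by rewrite (sum_widen_cond _ h).
- rewrite (eq_bigr (fun i : 'I_n => F i)); last first.
    by move=> i _; rewrite (ltn_trans (ltn_ord i) h) mul1n.
  rewrite (sum_widen_cond F (ltnW h)); apply: leq_sum => i _.
  by case: (i < n); rewrite ?mul1n ?mul0n.
Qed.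

Definition tE M r := if odd r then r + M else r.
Definition tO M r := if odd r then r else r + M.

Lemma mod2M_split M r z : odd M -> r < M ->
  ((z %% M == r) && ~~ odd z = (z %% M.*2 == tE M r)) /\
  ((z %% M == r) && odd z = (z %% M.*2 == tO M r)).
Proof.
move=> oM rM; have M0 : 0 < M by case: M oM rM.
have e1 : z %% M = z %% M.*2 %% M by rewrite modn_dvdm // -muln2 dvdn_mulr.
have e2 : odd z = odd (z %% M.*2) by rewrite odd_mod // odd_double.
have slt : z %% M.*2 < M.*2 by rewrite ltn_pmod // double_gt0.
rewrite e1 e2 /tE /tO; move: slt; set s := z %% M.*2 => slt.
case: (ltnP s M) => sM.
- rewrite (modn_small sM).
  case: (eqVneq s r) => [->|ne].
  + by case or: (odd r) => /=; split => //; apply/esym/eqP; lia.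
  + case or: (odd r) => /=; split => //; apply/esym/eqP; lia.
- have ss : s = (s - M) + M by rewrite subnK.
  have sM' : s - M < M by lia.
  rewrite ss modnDr (modn_small sM') oddD oM.
  case: (eqVneq (s - M) r) => [<-|ne].
  + case or: (odd (s - M)) => /=; split => //; apply/esym/eqP; lia.
  + case or: (odd r) => /=; split; rewrite ?andbF //; apply/esym/eqP; lia.
Qed.

Definition pS (b : nat -> bool) L0 (par : bool) := \sum_(z < L0) (b z && (odd z == par)).

Lemma cnt_par z : \sum_(z' < z) (odd z' == odd z) = z./2.
Proof.
case oz: (odd z).
- by rewrite -sum_odd; apply: eq_bigr => i _; case: (odd i).
- rewrite (eq_bigr (fun i : 'I_z => nat_of_bool (~~ odd i))); last by move=> i _; case: (odd i).
  by rewrite sum_even uphalf_half oz.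
Qed.

Lemma pinit_char (b : nat -> bool) L0 : pinit b -> (forall z, L0 <= z -> b z = false) ->
  forall z, b z = (z < (pS b L0 (odd z)).*2).
Proof.
move=> Pb fin z; have D := odd_double_half z.
case bz: (b z).
- have zL : z < L0 by case: (leqP L0 z) => // /fin; rewrite bz.
  have : z./2.+1 <= pS b L0 (odd z).
    have -> : z./2.+1 = \sum_(z' < z.+1) (odd z' == odd z).
      by rewrite big_ord_recr /= cnt_par eqxx addn1.
    rewrite /pS (sum_widen_cond (fun z' => nat_of_bool (odd z' == odd z)) zL); apply: leq_sum => i _.
    case: (ltnP i z.+1) => iz; rewrite ?mul0n ?mul1n //.
    case e: (odd i == odd z) => //; rewrite (pinit_below Pb bz) //; exact/eqP.
  by move=> h; apply/esym; lia.
- have : pS b L0 (odd z) <= z./2.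
    rewrite -cnt_par; apply: (leq_trans _ (sum_lt_le L0 z (fun i => nat_of_bool (odd i == odd z)))); apply: leq_sum => i _.
    case e: (odd i == odd z); rewrite ?andbF ?muln0 //.
    case: (ltnP i z) => iz; rewrite ?mul1n //=; first by case: (b i).
    case bi: (b i) => //; move: bz; by rewrite (pinit_below Pb bi) // (eqP e).
  by move=> h; apply/esym; lia.
Qed.

Local Open Scope ring_scope.

Lemma sum_runner_int (f : nat -> int) K M r : (r < M)%N ->
  \sum_(k < K) f (r + k * M)%N = \sum_(z < K * M) (if (z %% M)%N == r then f z else 0).
Proof.
move=> rM.
rewrite (sum_resid _ _ _ (fun z => if (z %% M)%N == r then f z else 0)) (bigD1 (Ordinal rM)) //=.
rewrite [X in _ + X]big1 ?addr0; last first.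
  move=> r' /eqP ne; apply: big1 => k _.
  rewrite addnC modnMDl modn_small //; case: eqP => // e; exfalso; apply: ne.
  exact: val_inj.
by apply: eq_bigr => k _; rewrite addnC modnMDl modn_small // eqxx.
Qed.

Lemma uZ_pos (b : nat -> bool) K M r : odd M -> (r < M)%N ->
  uZ b K M r = (odd r)%:Z + \sum_(k < K) (if b (r + k * M)%N then sgn (r + k * M)%N else 0).
Proof.
move=> oM rM; rewrite /uZ eZ_sum /runner.
case or: (odd r).
- rewrite -sumrN; congr (_ + _); apply: eq_bigr => k _.
  rewrite /sgn oddD oddM oM or andbT.
  by case: (b _); case: (odd k) => /=; rewrite ?oppr0 ?opprK.
- rewrite add0r; apply: eq_bigr => k _; rewrite /sgn oddD oddM oM or andbT.
  by [].
Qed.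

Lemma uZ_formula (b : nat -> bool) K M L0 r : odd M -> (r < M)%N ->
  pinit b -> (forall z, (L0 <= z)%N -> b z = false) -> (L0.*2 <= K * M)%N ->
  uZ b K M r = (odd r)%:Z
    + ((pS b L0 false).*2 %/ M.*2 + (tE M r < (pS b L0 false).*2 %% M.*2))%N%:Z
    - ((pS b L0 true).*2 %/ M.*2 + (tO M r < (pS b L0 true).*2 %% M.*2))%N%:Z.
Proof.
move=> oM rM Pb fin LK.
rewrite uZ_pos // (sum_runner_int (fun z => if b z then sgn z else 0)) // -addrA; congr (_ + _).
have pSle : forall par, ((pS b L0 par).*2 <= K * M)%N.
  move=> par; apply: leq_trans LK; rewrite leq_double /pS.
  apply: (leq_trans (_ : _ <= \sum_(z < L0) 1)%N); last by rewrite sum1_card card_ord.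
  by apply: leq_sum => i _; apply: leq_b1.
have tEl : (tE M r < M.*2)%N by rewrite /tE; case: (odd r); lia.
have tOl : (tO M r < M.*2)%N by rewrite /tO; case: (odd r); lia.
rewrite -!cnt_mod //.
rewrite (sum_widen_cond (fun z => nat_of_bool ((z %% M.*2)%N == tE M r)) (pSle false)).
rewrite (sum_widen_cond (fun z => nat_of_bool ((z %% M.*2)%N == tO M r)) (pSle true)).
rewrite !(big_morph Posz PoszD (erefl 0%:Z)) -sumrB; apply: eq_bigr => z _.
have [h1 h2] := mod2M_split z oM rM.
rewrite -h1 -h2 (pinit_char Pb fin z).
case: eqP => _; case oz: (odd z); rewrite /sgn ?oz /=; case: ltnP => _; case: ltnP => _; rewrite /= ?muln0 ?muln1 ?mul0n ?mul1n; lia.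
Qed.

Lemma core_balanced (b : nat -> bool) K M L0 : odd M -> pinit b ->
  (forall z, (L0 <= z)%N -> b z = false) -> (L0.*2 <= K * M)%N ->
  forall r s, (r < M)%N -> (s < M)%N -> uZ b K M r <= uZ b K M s + 1.
Proof.
move=> oM Pb fin LK r s rM sM.
rewrite (uZ_formula oM rM Pb fin LK) (uZ_formula oM sM Pb fin LK).
have M0 : (0 < M)%N by case: M oM {rM sM LK}.
have M20 : (0 < M.*2)%N by rewrite double_gt0.
have := ltn_pmod (pS b L0 false).*2 M20.
have := ltn_pmod (pS b L0 true).*2 M20.
move: ((pS b L0 false).*2 %% M.*2)%N ((pS b L0 true).*2 %% M.*2)%N => A B hB hA.
move: ((pS b L0 false).*2 %/ M.*2)%N ((pS b L0 true).*2 %/ M.*2)%N => P Q.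
rewrite /tE /tO; case: (odd r); case: (odd s);
  do 4 (case: ltnP => ?); lia.
Qed.

Local Close Scope ring_scope.

Lemma CC_ext (b : nat -> bool) L0 n M : (forall z, L0 <= z -> b z = false) -> L0 <= n ->
  CC b n M = CC b L0 M.
Proof.
move=> fin Ln; rewrite /CC.
rewrite (sum_widen_cond (fun x => \sum_(y < x) (b x && ~~ b y && odd (x - y) && (M %| x - y))) Ln).
apply: eq_bigr => x _; case: (ltnP x L0) => /= h; first by rewrite mul1n.
by rewrite mul0n big1 // => y _; rewrite fin.
Qed.

Lemma Tb_ext (b : nat -> bool) L0 n : (forall z, L0 <= z -> b z = false) -> L0 <= n ->
  Tb b n = Tb b L0.
Proof.
move=> fin Ln; rewrite /Tb.
rewrite (big_ord_widen n (fun z => if b z then sgn z else 0%R) Ln) [RHS]big_mkcond /=.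
by apply: eq_bigr => z _; case: (ltnP z L0) => // h; rewrite fin.
Qed.

Theorem CC_final (bX bY : nat -> bool) L0 M n : odd M -> pinit bY ->
  (forall z, L0 <= z -> bX z = false) -> (forall z, L0 <= z -> bY z = false) ->
  Tb bX L0 = Tb bY L0 -> L0 <= n ->
  CC bY n M <= CC bX n M.
Proof.
move=> oM Pb fX fY ET Ln.
have M0 : 0 < M by case: M oM.
have LK : L0 <= L0.*2 * M by rewrite -{1}[L0]muln1 -addnn leq_mul ?leq_addr.
rewrite (CC_ext M fX Ln) (CC_ext M fY Ln) -(CC_ext M fX LK) -(CC_ext M fY LK).
apply: CC_compare => //.
  by rewrite (Tb_ext fX LK) (Tb_ext fY LK).
apply: (core_balanced (L0 := L0)) => //.
by rewrite leq_pmulr.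
Qed.

Local Close Scope ring_scope.

Lemma geq_trans : transitive geq. Proof. by move=> a b c h1 h2; apply: leq_trans h2 h1. Qed.

Lemma part_dec la i k : sorted geq la -> i <= k -> part la k <= part la i.
Proof.
move=> S ik; rewrite /part.
case: (ltnP k (size la)) => kl; last by rewrite nth_default.
exact: (sorted_leq_nth geq_trans (fun x => leqnn x) 0 S) (leq_ltn_trans ik kl) kl ik.
Qed.

Lemma part_pos la i : is_partition la -> i < size la -> 0 < part la i.
Proof. by case/andP=> _ /all_nthP A il; apply: A. Qed.

Lemma part_out la i : size la <= i -> part la i = 0.
Proof. by move=> h; rewrite /part nth_default. Qed.

Lemma head_ge a s k : sorted geq (a :: s) -> part s k <= a.
Proof.
move=> S; have := part_dec S (leq0n k.+1); by rewrite /part /=.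
Qed.

Lemma conj_ge la i j : sorted geq la -> j < part la i -> i < conj_part la j.
Proof.
elim: la i => [|a s IH] [|i] S h; rewrite /conj_part /=.
- by rewrite /part nth_nil in h.
- by rewrite /part nth_nil in h.
- by move: h; rewrite /part /= => ->.
- have S' := path_sorted S.
  have h' : j < part s i by [].
  have := IH i S' h'; rewrite /conj_part.
  have := head_ge i S => ha.
  by rewrite (leq_trans h' ha) add1n.
Qed.

Lemma conj_le la i j : sorted geq la -> part la i <= j -> conj_part la j <= i.
Proof.
elim: la i => [|a s IH] [|i] S h; rewrite /conj_part /=.
- by [].
- by [].
- move: h; rewrite /part /= => h; rewrite ltnNge h /=.
  have := IH 0 (path_sorted S) (leq_trans (head_ge 0 S) h).
  by rewrite /conj_part.
- have := IH i (path_sorted S) h; rewrite /conj_part.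
  by case: (j < a) => /=; lia.
Qed.

Lemma conj_size la j : conj_part la j <= size la.
Proof. exact: count_size. Qed.

Lemma conj_dec la j j' : j <= j' -> conj_part la j' <= conj_part la j.
Proof.
move=> jj; apply: sub_count => x /= h; exact: leq_ltn_trans jj h.
Qed.

Local Close Scope ring_scope.

Definition xb la N i := part la i + (N - i.+1).
Definition yb la N j := N + j - conj_part la j.
Definition beadl la N := [seq xb la N i | i <- iota 0 N].
Definition bead la N z := z \in beadl la N.

Section Beads.
Variables (la : seq nat) (N : nat).
Hypothesis S : sorted geq la.
Hypothesis SN : size la <= N.

Lemma conj_N j : conj_part la j <= N.
Proof. exact: leq_trans (conj_size la j) SN. Qed.

Lemma xb_lt i k : i < k -> k < N -> xb la N k < xb la N i.
Proof. move=> ik kN; have := part_dec S (ltnW ik); rewrite /xb; lia. Qed.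

Lemma xb_inj i k : i < N -> k < N -> xb la N i = xb la N k -> i = k.
Proof.
move=> iN kN e; case: (ltngtP i k) => // h.
- by have := xb_lt h kN; rewrite e ltnn.
- by have := xb_lt h iN; rewrite e ltnn.
Qed.

Lemma yb_lt j j' : j < j' -> yb la N j < yb la N j'.
Proof.
move=> jj; have := conj_dec la (ltnW jj); have := conj_N j; have := conj_N j'.
rewrite /yb; lia.
Qed.

Lemma xy_lt i j : i < N -> (yb la N j < xb la N i) = (j < part la i).
Proof.
move=> iN; have := conj_N j; rewrite /yb /xb.
case: (ltnP j (part la i)) => h.
- have := conj_ge S h; lia.
- have := conj_le S h; lia.
Qed.

Lemma xy_neq i j : i < N -> yb la N j != xb la N i.
Proof.
move=> iN; have := conj_N j; rewrite /yb /xb.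
case: (ltnP j (part la i)) => h.
- have := conj_ge S h; lia.
- have := conj_le S h; lia.
Qed.

Definition Lb := N + part la 0.

Lemma xb_bound i : i < N -> xb la N i < Lb.
Proof. move=> iN; have := part_dec S (leq0n i); rewrite /xb /Lb; lia. Qed.

Lemma yb_bound j : j < part la 0 -> yb la N j < Lb.
Proof. move=> jl; have := conj_N j; rewrite /yb /Lb; lia. Qed.

Lemma bead_bound z : bead la N z -> z < Lb.
Proof. by case/mapP=> i; rewrite mem_iota add0n /= => iN ->; apply: xb_bound. Qed.

Lemma uniq_beadl : uniq (beadl la N).
Proof.
rewrite map_inj_in_uniq ?iota_uniq // => i k; rewrite !mem_iota !add0n /=.
exact: xb_inj.
Qed.

Lemma uniq_ybl m : uniq [seq yb la N j | j <- iota 0 m].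
Proof.
rewrite map_inj_in_uniq ?iota_uniq // => i k _ _ e.
case: (ltngtP i k) => // h.
- by have := yb_lt h; rewrite e ltnn.
- by have := yb_lt h; rewrite e ltnn.
Qed.

Lemma complement z : z < Lb -> bead la N z \/ exists2 j, j < part la 0 & z = yb la N j.
Proof.
move=> zL.
set s := beadl la N ++ [seq yb la N j | j <- iota 0 (part la 0)].
have us : uniq s.
  rewrite cat_uniq uniq_beadl uniq_ybl andbT /=.
  apply/hasPn => y /mapP [j _ ->]; apply/mapP => [[i]]; rewrite mem_iota add0n /= => iN e.
  by move: (xy_neq j iN); rewrite e eqxx.
have sub : {subset s <= iota 0 Lb}.
  move=> y; rewrite mem_cat mem_iota add0n /= => /orP [/bead_bound //|].
  by case/mapP=> j; rewrite mem_iota add0n /= => jl ->; apply: yb_bound.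
have sz : size (iota 0 Lb) <= size s by rewrite size_cat !size_map !size_iota.
have [_ E] := uniq_min_size us sub sz.
have : z \in s by rewrite E mem_iota.
rewrite mem_cat => /orP [h|]; first by left.
case/mapP=> j; rewrite mem_iota add0n /= => jl ->; right; by exists j.
Qed.

End Beads.

Section Sums.
Variables (la : seq nat) (N : nat).
Hypothesis S : sorted geq la.
Hypothesis SN : size la <= N.

Lemma sum_ord_iota n (F : nat -> nat) : \sum_(x < n) F x = \sum_(x <- iota 0 n) F x.
Proof. by rewrite -(big_mkord xpredT) /index_iota subn0. Qed.

Lemma sum_beads n (G : nat -> nat) : Lb la N <= n ->
  \sum_(x < n) bead la N x * G x = \sum_(i < N) G (xb la N i).
Proof.
move=> Ln.
rewrite (eq_bigr (fun x : 'I_n => if bead la N x then G x else 0)); last first.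
  by move=> x _; case: (bead _ _ _); rewrite ?mul1n ?mul0n.
rewrite -big_mkcond /= -(big_mkord (bead la N) G) /index_iota subn0 -big_filter.
rewrite -(big_mkord xpredT (fun i => G (xb la N i))) /index_iota subn0 -(big_map (xb la N) xpredT G) -/(beadl la N).
apply: perm_big; apply: uniq_perm.
- by rewrite filter_uniq ?iota_uniq.
- exact: uniq_beadl.
- move=> z; rewrite mem_filter mem_iota add0n /=.
  case bz: (bead la N z) => /=; last by rewrite /bead in bz; rewrite bz.
  have := bead_bound S SN bz; rewrite /bead in bz; rewrite bz => h.
  by rewrite (leq_trans h Ln).
Qed.

Lemma sum_nonbeads i (F : nat -> nat) : i < N ->
  \sum_(y < xb la N i) (~~ bead la N y) * F y = \sum_(j < part la i) F (yb la N j).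
Proof.
move=> iN.
rewrite (eq_bigr (fun y : 'I_(xb la N i) => if ~~ bead la N y then F y else 0)); last first.
  by move=> y _; case: (bead _ _ _); rewrite ?mul1n ?mul0n.
rewrite -big_mkcond /= -(big_mkord (fun y => ~~ bead la N y) F) /index_iota subn0 -big_filter.
rewrite -(big_mkord xpredT (fun j => F (yb la N j))) /index_iota subn0 -(big_map (yb la N) xpredT F).
apply: perm_big; apply: uniq_perm.
- by rewrite filter_uniq ?iota_uniq.
- exact: uniq_ybl.
- move=> z; rewrite mem_filter mem_iota add0n /=.
  apply/andP/mapP.
  + move=> [nb zx].
    have zL : z < Lb la N by apply: leq_trans zx (ltnW (xb_bound S SN iN)).
    case: (complement S SN zL) => [bz|[j jl e]]; first by rewrite bz in nb.
    rewrite e in zx *.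
    by exists j => //; rewrite mem_iota add0n /= -(xy_lt S SN j iN).
  + case=> j; rewrite mem_iota add0n /= => jl ->; split.
    * apply/mapP => [[k]]; rewrite mem_iota add0n /= => kN e.
      by move: (xy_neq S SN j kN); rewrite e eqxx.
    * by rewrite (xy_lt S SN j iN).
Qed.

End Sums.

Section Identity.
Variables (la : seq nat) (N : nat).
Hypothesis S : sorted geq la.
Hypothesis SN : size la <= N.

Lemma hook_xy i j : i < N -> j < part la i -> hook la i j = xb la N i - yb la N j.
Proof.
move=> iN jl; have := conj_ge S jl; have := conj_N SN j.
rewrite /hook /xb /yb; lia.
Qed.

Lemma hook_identity (F : nat -> nat) n : Lb la N <= n ->
  \sum_(i < size la) \sum_(j < part la i) F (hook la i j)
  = \sum_(x < n) \sum_(y < x) (bead la N x && ~~ bead la N y) * F (x - y).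
Proof.
move=> Ln.
rewrite (eq_bigr (fun x : 'I_n => bead la N x * \sum_(y < x) (~~ bead la N y) * F (x - y))); last first.
  move=> x _; rewrite big_distrr /=; apply: eq_bigr => y _.
  by case: (bead _ _ x); case: (bead _ _ y); rewrite /= ?mul1n ?mul0n.
rewrite (sum_beads S SN (fun x => \sum_(y < x) (~~ bead la N y) * F (x - y)) Ln).
rewrite (eq_bigr (fun i : 'I_N => \sum_(j < part la i) F (xb la N i - yb la N j))); last first.
  by move=> i _; rewrite (sum_nonbeads S SN (fun y => F (xb la N i - y))).
rewrite (big_ord_widen N (fun i => \sum_(j < part la i) F (hook la i j)) SN) big_mkcond /=.
apply: eq_bigr => i _; case: ifP => h.
- by apply: eq_bigr => j _; rewrite hook_xy.
- by rewrite part_out ?big_ord0 // leqNgt h.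
Qed.

End Identity.

Local Close Scope ring_scope.

Lemma rm_le la mu : rm_domino la mu -> forall k, part mu k <= part la k.
Proof.
case=> _ [[i [h1 h2]] | [i [h1 [h2 [h3 h4]]]]] k.
- case: (eqVneq k i) => [->|ne]; [by rewrite h1; lia | by rewrite h2].
- case: (eqVneq k i) => [->|ne1]; first by rewrite h1; lia.
  case: (eqVneq k i.+1) => [->|ne2]; first by rewrite h2; lia.
  by rewrite h4.
Qed.

Lemma size_le la mu : is_partition mu -> (forall k, part mu k <= part la k) -> size mu <= size la.
Proof.
move=> Pm le; case: (leqP (size mu) (size la)) => // h.
have := le (size mu).-1; rewrite (part_out (la := la)); last by lia.
have := part_pos Pm (_ : (size mu).-1 < size mu); lia.
Qed.

Definition per2 (F : nat -> nat) := forall z, F z.+2 = F z.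

Lemma rm_inv la mu N F : is_partition la -> size la <= N -> per2 F -> rm_domino la mu ->
  \sum_(i < N) F (xb mu N i) = \sum_(i < N) F (xb la N i).
Proof.
move=> Pl SN PF [Pm [[i [h1 h2]] | [i [h1 [h2 [h3 h4]]]]]].
- apply: eq_bigr => k _; rewrite /xb.
  case: (eqVneq (k : nat) i) => [->|ne]; last by rewrite h2.
  by rewrite h1 addSn addSn PF.
- have iN : i.+1 < N.
    have : 0 < part la i.+1 by rewrite h2.
    case: (ltnP i.+1 (size la)) => [h _|h]; first by apply: leq_trans h SN.
    by rewrite part_out.
  pose a : 'I_N := Ordinal (ltnW iN); pose b : 'I_N := Ordinal iN.
  rewrite [RHS](reindex_inj (@perm_inj _ (tperm a b))) /=.
  apply: eq_bigr => k _.
  case: (tpermP a b k) => [ka|kb|ka kb].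
  + rewrite ka /xb (_ : (a : nat) = i) // (_ : (b : nat) = i.+1) // h2 -h3; congr F; lia.
  + rewrite kb /xb (_ : (a : nat) = i) // (_ : (b : nat) = i.+1) // h1 -h3 -PF; congr F; lia.
  + rewrite /xb h4 //.
    * by apply/eqP => e; apply: ka; apply: val_inj.
    * by apply/eqP => e; apply: kb; apply: val_inj.
Qed.

Lemma chain_props la mu : rm_dominoes la mu -> is_partition la ->
  [/\ is_partition mu, forall k, part mu k <= part la k &
      forall N F, size la <= N -> per2 F ->
        \sum_(i < N) F (xb mu N i) = \sum_(i < N) F (xb la N i)].
Proof.
elim=> [l|l m n st _ IH] Pl; first by split.
have Pm : is_partition m by case: st.
have lem := rm_le st.
have [Pn len inv] := IH Pm.
split => //; first by move=> k; apply: leq_trans (len k) (lem k).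
move=> N F SN PF.
rewrite inv //; last by apply: leq_trans (size_le Pm lem) SN.
exact: rm_inv.
Qed.

Local Close Scope ring_scope.

Lemma mk_part (f : nat -> nat) n : (forall k, f k.+1 <= f k) -> f n = 0 ->
  exists s, is_partition s /\ forall k, part s k = f k.
Proof.
have dec : forall (g : nat -> nat), (forall k, g k.+1 <= g k) -> forall i k, i <= k -> g k <= g i.
  move=> g Hg i k ik; elim: k ik => [|k IH]; first by rewrite leqn0 => /eqP ->.
  rewrite leq_eqVlt => /orP [/eqP <-//|ik]; exact: leq_trans (Hg k) (IH ik).
elim: n f => [|n IH] f Hf fn.
  exists [::]; split => // k; rewrite /part nth_nil.
  by have := dec f Hf 0 k (leq0n k); rewrite fn leqn0 => /eqP.
have [s [Ps Es]] := IH (fun k => f k.+1) (fun k => Hf k.+1) fn.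
case: (posnP (f 0)) => f0.
  exists [::]; split => // k; rewrite /part nth_nil.
  by have := dec f Hf 0 k (leq0n k); rewrite f0 leqn0 => /eqP.
exists (f 0 :: s); split; last by case=> [|k] //; rewrite /part /= -Es.
move: Ps; rewrite /is_partition /= f0 => /andP [So Po]; rewrite Po andbT.
case: s Es So {Po} => [|y t] Es So //=.
rewrite andbT; apply/andP; split; last exact: So.
by have := Es 0; rewrite /part /= => ->; apply: Hf.
Qed.

Lemma find_end mu n i : is_partition mu -> size mu <= i + n ->
  part mu i = part mu i.+1 -> 0 < part mu i ->
  exists j, [/\ part mu j = part mu j.+1, 0 < part mu j & part mu j.+2 < part mu j.+1].
Proof.
move=> Pm; have S : sorted geq mu by case/andP: Pm.
elim: n i => [|n IH] i sz e pos.
  by rewrite addn0 in sz; rewrite part_out in pos.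
case: (ltnP (part mu i.+2) (part mu i.+1)) => h; first by exists i.
have e2 : part mu i.+2 = part mu i.+1.
  by apply/eqP; rewrite eqn_leq h part_dec.
apply: (IH i.+1) => //; [by rewrite addSnnS | by rewrite -e].
Qed.

Lemma nodom_local mu : is_partition mu -> ~ (exists nu, rm_domino mu nu) ->
  forall i, part mu i <= (part mu i.+1).+1 /\ (part mu i = part mu i.+1 -> part mu i = 0).
Proof.
move=> Pm ND; have S : sorted geq mu by case/andP: Pm.
have decm : forall k, part mu k.+1 <= part mu k by move=> k; apply: part_dec.
move=> i; split.
- case: (leqP (part mu i) (part mu i.+1).+1) => // h; exfalso; apply: ND.
  pose f (k : nat) : nat := if eqn k i then part mu i - 2 else part mu k.
  have il : i < size mu by case: (ltnP i (size mu)) => // h'; move: h; rewrite (part_out h').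
  have [nu [Pn En]] : exists nu, is_partition nu /\ forall k, part nu k = f k.
    apply: (mk_part (n := size mu)).
      move=> k; rewrite /f; case: ifP => [/eqnP e1|n1]; case: ifP => [/eqnP e2|n2].
      + lia.
      + rewrite -e1; have := decm k; lia.
      + rewrite e2; lia.
      + exact: decm.
    rewrite /f; case: ifP => [/eqnP e1|_]; [lia | by rewrite part_out].
  exists nu; split => //; left; exists i; split.
    rewrite En /f; case: ifP => [_|/eqnP //]; lia.
  move=> k ne; rewrite En /f; case: ifP => [/eqnP e|//]; by rewrite e eqxx in ne.
- move=> e; case: (posnP (part mu i)) => // pos; exfalso; apply: ND.
  have [j [ej posj lt]] := find_end Pm (leq_addl i (size mu)) e pos.
  pose f (k : nat) : nat := if eqn k j || eqn k j.+1 then (part mu k).-1 else part mu k.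
  have jl : j.+1 < size mu.
    case: (ltnP j.+1 (size mu)) => // h'; move: posj; rewrite ej part_out //.
  have [nu [Pn En]] : exists nu, is_partition nu /\ forall k, part nu k = f k.
    apply: (mk_part (n := size mu)).
      move=> k; rewrite /f.
      case: ifP => [/orP [/eqnP e1|/eqnP e1]|n1]; case: ifP => [/orP [/eqnP e2|/eqnP e2]|n2].
      + lia.
      + lia.
      + have := decm k; lia.
      + have := decm k; lia.
      + lia.
      + exfalso; move: n2; rewrite (_ : k = j) ?eqnE ?eqxx //; lia.
      + by move: n1; rewrite e2 !eqnE eqxx orbT.
      + rewrite e2; lia.
      + exact: decm.
    rewrite /f; case: ifP => [/orP [/eqnP e1|/eqnP e1]|_]; [lia | lia | by rewrite part_out].
  have fj : f j = (part mu j).-1 by rewrite /f; case: ifP => //; rewrite eqnE eqxx.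
  have fj1 : f j.+1 = (part mu j.+1).-1 by rewrite /f; case: ifP => //; rewrite !eqnE eqxx orbT.
  exists nu; split => //; right; exists j; split; [|split; [|split]].
  + rewrite En fj; lia.
  + rewrite En fj1; have := decm j.+1; lia.
  + by rewrite !En fj fj1 ej.
  + move=> k n1 n2; rewrite En /f; case: ifP => // /orP [/eqnP e1|/eqnP e1].
    * by rewrite e1 eqxx in n1.
    * by rewrite e1 eqxx in n2.
Qed.

Lemma bead_ex la N z : bead la N z -> exists2 i, i < N & xb la N i = z.
Proof. by case/mapP=> i; rewrite mem_iota add0n /= => iN ->; exists i. Qed.

Lemma ex_bead la N z i : i < N -> xb la N i = z -> bead la N z.
Proof. by move=> iN <-; apply/mapP; exists i; rewrite ?mem_iota. Qed.

Lemma local_pinit mu N : is_partition mu -> size mu <= N ->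
  (forall i, part mu i <= (part mu i.+1).+1 /\ (part mu i = part mu i.+1 -> part mu i = 0)) ->
  pinit (bead mu N).
Proof.
move=> Pm SN loc z /bead_ex [i iN xi].
have S : sorted geq mu by case/andP: Pm.
have [l1 l2] := loc i.
have d1 := part_dec S (leqnSn i).
case: (eqVneq (part mu i) (part mu i.+1).+1) => e.
- have i1N : i.+1 < N.
    case: (ltnP i.+1 N) => // h.
    move: xi e; rewrite /xb (part_out (la := mu) (i := i.+1)); [lia | exact: leq_trans SN h].
  apply: (ex_bead (i := i.+1)) => //; move: xi; rewrite /xb e; lia.
- have e0 : part mu i = 0 by apply: l2; lia.
  have e1 : part mu i.+1 = 0 by lia.
  have d2 := part_dec S (leqnSn i.+1).
  have e2 : part mu i.+2 = 0 by lia.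
  apply: (ex_bead (i := i.+2)); move: xi; rewrite /xb e0 ?e2; lia.
Qed.

Lemma core_odd (b : nat -> bool) x y : pinit b -> b x -> ~~ b y -> y < x -> odd (x - y).
Proof.
move=> Pb bx nby yx; apply/negPn/negP => ev; move/negP: nby; apply.
apply: (pinit_iter (n := (x - y)./2) Pb).
have := odd_double_half (x - y); rewrite (negbTE ev) add0n => ->.
by rewrite subnKC // ltnW.
Qed.

Local Close Scope ring_scope.

Lemma logn_prod p (I : Type) (r : seq I) (P : pred I) (F : I -> nat) :
  (forall i, P i -> 0 < F i) ->
  logn p (\prod_(i <- r | P i) F i) = \sum_(i <- r | P i) logn p (F i).
Proof.
move=> H; elim: r => [|a r IH]; first by rewrite !big_nil logn1.
rewrite !big_cons; case: ifP => Pa //.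
by rewrite lognM ?IH ?H // prodn_cond_gt0.
Qed.

Lemma logn_sum_dvd p h B : prime p -> 0 < h -> h <= B ->
  logn p h = \sum_(k < B) (p ^ k.+1 %| h).
Proof.
move=> pp h0 hB.
have lB : logn p h <= B by apply: leq_trans (ltnW (ltn_logl p h0)) hB.
rewrite (eq_bigr (fun k : 'I_B => (k < logn p h) * 1)); last first.
  by move=> k _; rewrite pfactor_dvdn // muln1.
by rewrite -(sum_widen_cond (fun _ => 1) lB) sum1_card card_ord.
Qed.

Lemma hook_pos la i j : 0 < hook la i j.
Proof. by rewrite /hook addn1. Qed.

Lemma hook_lt la N i j : sorted geq la -> size la <= N -> i < size la -> j < part la i ->
  hook la i j < Lb la N.
Proof.
move=> S SN il jl; have iN : i < N by apply: leq_trans il SN.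
rewrite (hook_xy S SN iN jl); apply: leq_ltn_trans (leq_subr _ _) _.
exact: xb_bound.
Qed.

Lemma val_gen la N n B (G : nat -> nat -> nat) : sorted geq la -> size la <= N ->
  Lb la N <= n ->
  \sum_(i < size la) \sum_(j < part la i) \sum_(k < B) G k (hook la i j)
  = \sum_(k < B) \sum_(x < n) \sum_(y < x) (bead la N x && ~~ bead la N y) * G k (x - y).
Proof.
move=> S SN Ln.
rewrite (eq_bigr (fun i : 'I_(size la) => \sum_(k < B) \sum_(j < part la i) G k (hook la i j))); last first.
  by move=> i _; rewrite exchange_big.
rewrite exchange_big /=; apply: eq_bigr => k _.
exact: (hook_identity S SN (G k) Ln).
Qed.

Lemma val_odd la N n p : is_partition la -> size la <= N -> Lb la N <= n -> prime p ->
  logn p (odd_hook_prod la) = \sum_(k < Lb la N) CC (bead la N) n (p ^ k.+1).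
Proof.
move=> Pl SN Ln pp; have S : sorted geq la by case/andP: Pl.
rewrite /odd_hook_prod logn_prod; last by move=> i _; apply: prodn_cond_gt0 => j _; apply: hook_pos.
rewrite (eq_bigr (fun i : 'I_(size la) => \sum_(j < part la i) \sum_(k < Lb la N)
    (fun k d => odd d && (p ^ k.+1 %| d)) k (hook la i j))); last first.
  move=> i _; rewrite logn_prod; last by move=> j _; apply: hook_pos.
  rewrite big_mkcond /=; apply: eq_bigr => j _.
  case: ifP => oh; last by rewrite big1.
  by rewrite (logn_sum_dvd pp (hook_pos la i j) (ltnW (hook_lt S SN (ltn_ord i) (ltn_ord j)))).
rewrite (val_gen (Lb la N) (fun k d => odd d && (p ^ k.+1 %| d)) S SN Ln); apply: eq_bigr => k _; rewrite /CC.
apply: eq_bigr => x _; apply: eq_bigr => y _.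
by case: (bead _ _ x); case: (bead _ _ y); case: (odd _); case: (_ %| _).
Qed.

Lemma core_hook_odd mu N i j : is_partition mu -> size mu <= N -> pinit (bead mu N) ->
  i < size mu -> j < part mu i -> odd (hook mu i j).
Proof.
move=> Pm SN Pb il jl; have S : sorted geq mu by case/andP: Pm.
have iN : i < N by apply: leq_trans il SN.
rewrite (hook_xy S SN iN jl); apply: (core_odd Pb).
- by apply: (ex_bead iN).
- apply/mapP => [[k]]; rewrite mem_iota add0n /= => kN e.
  by move: (xy_neq S SN j kN); rewrite e eqxx.
- by rewrite (xy_lt S SN j iN).
Qed.

Lemma val_core mu N n p B : is_partition mu -> size mu <= N -> Lb mu N <= n ->
  Lb mu N <= B -> prime p -> pinit (bead mu N) ->
  logn p (hook_prod mu) = \sum_(k < B) CC (bead mu N) n (p ^ k.+1).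
Proof.
move=> Pm SN Ln LB pp Pb; have S : sorted geq mu by case/andP: Pm.
rewrite /hook_prod logn_prod; last by move=> i _; apply: prodn_cond_gt0 => j _; apply: hook_pos.
rewrite (eq_bigr (fun i : 'I_(size mu) => \sum_(j < part mu i) \sum_(k < B)
    (fun k d => p ^ k.+1 %| d) k (hook mu i j))); last first.
  move=> i _; rewrite logn_prod; last by move=> j _; apply: hook_pos.
  apply: eq_bigr => j _.
  have := hook_lt S SN (ltn_ord i) (ltn_ord j) => h.
  by rewrite (logn_sum_dvd pp (hook_pos mu i j) (leq_trans (ltnW h) LB)).
rewrite (val_gen B (fun k d => p ^ k.+1 %| d) S SN Ln); apply: eq_bigr => k _; rewrite /CC.
apply: eq_bigr => x _; apply: eq_bigr => y _.
case bx: (bead _ _ x); case by_: (bead _ _ y) => //=.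
by rewrite (core_odd Pb bx) ?by_ // mul1n.
Qed.

Lemma val2_core mu N : is_partition mu -> size mu <= N -> pinit (bead mu N) ->
  logn 2 (hook_prod mu) = 0.
Proof.
move=> Pm SN Pb.
rewrite /hook_prod logn_prod; last by move=> i _; apply: prodn_cond_gt0 => j _; apply: hook_pos.
apply: big1 => i _; rewrite logn_prod; last by move=> j _; apply: hook_pos.
apply: big1 => j _; rewrite lognE dvdn2 (core_hook_odd Pm SN Pb (ltn_ord i) (ltn_ord j)).
by rewrite !andbF.
Qed.

Lemma Tb_beads la N n : sorted geq la -> size la <= N -> Lb la N <= n ->
  Tb (bead la N) n = (Posz (\sum_(i < N) ~~ odd (xb la N i)) - Posz (\sum_(i < N) odd (xb la N i)))%R.
Proof.
move=> S SN Ln.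
rewrite -(sum_beads S SN (fun z => nat_of_bool (~~ odd z)) Ln) -(sum_beads S SN (fun z => nat_of_bool (odd z)) Ln).
rewrite !(big_morph Posz PoszD (erefl (Posz 0))) -sumrB /Tb; apply: eq_bigr => z _.
by case: (bead _ _ _); rewrite /sgn; case: (odd _).
Qed.

Theorem corollary3p4 (la mu : seq nat) :
  is_partition la -> two_core la mu -> hook_prod mu %| odd_hook_prod la.
Proof.
move=> Pl [ch nodom].
have [Pm le inv] := chain_props ch Pl.
have Sl : sorted geq la by case/andP: Pl.
have Sm : sorted geq mu by case/andP: Pm.
pose N := size la.
have SmN : size mu <= N := size_le Pm le.
have SlN : size la <= N := leqnn _.
have Pb : pinit (bead mu N) := local_pinit Pm SmN (nodom_local Pm nodom).
pose L0 := Lb la N.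
have LmL : Lb mu N <= L0 by rewrite /L0 /Lb leq_add2l le.
have fX : forall z, L0 <= z -> bead la N z = false.
  by move=> z h; apply/negbTE/negP => /(bead_bound Sl SlN); rewrite -/L0; lia.
have fY : forall z, L0 <= z -> bead mu N z = false.
  by move=> z h; apply/negbTE/negP => /(bead_bound Sm SmN) h'; lia.
have per_odd : per2 (fun z => nat_of_bool (odd z)) by move=> z /=; rewrite negbK.
have per_even : per2 (fun z => nat_of_bool (~~ odd z)) by move=> z /=; rewrite negbK.
have ET : Tb (bead la N) L0 = Tb (bead mu N) L0.
  rewrite (Tb_beads Sl SlN (leqnn _)) (Tb_beads Sm SmN LmL).
  by rewrite (inv N _ SlN per_odd) (inv N _ SlN per_even).
have Hodd : forall M, odd M -> CC (bead mu N) L0 M <= CC (bead la N) L0 M.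
  by move=> M oM; apply: CC_final oM Pb fX fY ET (leqnn L0).
have pos_mu : 0 < hook_prod mu.
  by apply: prodn_cond_gt0 => i _; apply: prodn_cond_gt0 => j _; apply: hook_pos.
have pos_la : 0 < odd_hook_prod la.
  by apply: prodn_cond_gt0 => i _; apply: prodn_cond_gt0 => j _; apply: hook_pos.
apply/(dvdn_partP _ pos_mu) => p; rewrite mem_primes => /and3P [pp _ _].
rewrite p_part pfactor_dvdn //.
case: (eqVneq p 2) => [->|p2]; first by rewrite (val2_core Pm SmN Pb).
have op : odd p by apply/negPn/negP => /(prime_oddPn pp) e; rewrite e eqxx in p2.
rewrite (val_core (n := L0) (B := L0) Pm SmN LmL LmL pp Pb).
rewrite (val_odd (n := L0) Pl SlN (leqnn _) pp).
by apply: leq_sum => k _; apply: Hodd; rewrite oddX op.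
Qed.

Local Close Scope ring_scope.
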